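(* Let $a=(a_1<\dots<a_n)$ be the sequence of a matching of size $n$ and $d(a)=\sum_i(a_i-i)$. For an indeterminate $t$, let $\Phi_a(\tau,t)$ be the coefficient of $\prod_{i=1}^n u_i^{a_i-1}$ in the formal power series $$\prod_{i=1}^n(1+\tau u_i)^t\prod_{1\le i<j\le n}(u_j-u_i)(1+\tau u_j+u_iu_j),$$ where $(1+\tau u)^t=\sum_{k\ge0}\binom{t}{k}\tau^ku^k$. Then $\Phi_a(\tau,t)$ is a polynomial in $\tau$ with coefficients in $\mathbb{Q}[t]$, of degree $d(a)$ in $\tau$, whose coefficient of $\tau^{d(a)}$ is $$D_a(t)=\det_{1\le i,j\le n}\left[\binom{t+i-1}{a_i-j}\right].$$
   Context: A matching of size $n$ is a set of $n$ disjoint noncrossing pairs partitioning $\{1,\dots,2n\}$; its sequence $a_1<\dots<a_n$ lists the smaller elements of its arches (so $a_i\le 2i-1$). $\binom{x}{k}=x(x-1)\cdots(x-k+1)/k!$ for $k\ge0$ and $0$ for $k<0$. *)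

(* Defs.v *)
From HB Require Import structures.
From mathcomp Require Import all_boot all_order all_algebra.
Set Implicit Arguments. Unset Strict Implicit. Unset Printing Implicit Defensive.
Import Order.TTheory GRing.Theory Num.Theory.
Local Open Scope ring_scope.

Definition is_matching (n : nat) (M : seq (nat * nat)) : bool :=
  [&& size M == n,
      all (fun p => (p.1 < p.2)%N) M,
      perm_eq (flatten [seq [:: p.1; p.2] | p <- M]) (iota 1 (2 * n)) &
      all (fun p => all (fun q =>
             ~~ [&& (p.1 < q.1)%N, (q.1 < p.2)%N & (p.2 < q.2)%N]) M) M].

Definition matching_seq (M : seq (nat * nat)) : seq nat :=
  sort leq [seq p.1 | p <- M].

(* d(a) = sum_i (a_i - i)  (1-based i; a is read 0-based via nth). *)
Definition dsum (n : nat) (a : seq nat) : nat :=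
  (\sum_(i < n) (nth 0 a i - i.+1))%N.

Definition binomP (x : {poly rat}) (k : int) : {poly rat} :=
  match k with
  | Posz k => (k`!%:R)^-1 *: \prod_(m < k) (x - (m%:R)%:P)
  | Negz _ => 0
  end.

(* D_a(t) = det [ binom(t+i-1, a_i - j) ]_{1<=i,j<=n}, written 0-based. *)
Definition Dpoly (n : nat) (a : seq nat) : {poly rat} :=
  \det (\matrix_(i < n, j < n)
          binomP ('X + ((i : nat)%:R)%:P) ((nth 0 a i)%:Z - (j : nat)%:Z - 1)).

Definition mps (R : Type) (n : nat) := ('I_n -> nat) -> R.

Section MPS.
Variables (R : comRingType) (n : nat).

Definition mps_one : mps R n :=
  fun e => if [forall k, e k == 0%N] then 1 else 0.

Definition mps_add (f g : mps R n) : mps R n := fun e => f e + g e.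

Definition mps_mul (f g : mps R n) : mps R n :=
  fun e => \sum_(d : {ffun 'I_n -> 'I_(\max_(k < n) e k).+1}
                  | [forall k, (d k <= e k)%N])
             f (fun k => nat_of_ord (d k)) * g (fun k => (e k - d k)%N).

Definition mmono (c : R) (m : 'I_n -> nat) : mps R n :=
  fun e => if [forall k, e k == m k] then c else 0.

Definition uvec (i : 'I_n) : 'I_n -> nat := fun k => nat_of_bool (k == i).

End MPS.

(* Coefficient ring Q[t][tau]:  outer variable tau, inner variable t. *)
Definition tau : {poly {poly rat}} := 'X.

(* (1 + tau u_i)^t = sum_k binom(t,k) tau^k u_i^k *)
Definition pow_factor (n : nat) (i : 'I_n) : mps {poly {poly rat}} n :=
  fun e => if [forall k, (k != i) ==> (e k == 0%N)]
           then (binomP 'X (e i))%:P * tau ^+ (e i) else 0.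

Definition pair_factor (n : nat) (i j : 'I_n) : mps {poly {poly rat}} n :=
  mps_mul
    (mps_add (mmono 1 (uvec j)) (mmono (-1) (uvec i)))
    (mps_add (mmono 1 (fun _ => 0%N))
       (mps_add (mmono tau (uvec j))
                (mmono 1 (fun k => (uvec i k + uvec j k)%N)))).

Definition Phi (n : nat) (a : seq nat) : {poly {poly rat}} :=
  mps_mul
    (\big[@mps_mul _ n/@mps_one _ n]_(i < n) pow_factor i)
    (\big[@mps_mul _ n/@mps_one _ n]_(i < n)
        \big[@mps_mul _ n/@mps_one _ n]_(j < n | (i < j)%N) pair_factor i j)
    (fun i => (nth 0 a i).-1).

(* Main.v *)
Require Import Defs.
From HB Require Import structures.
From mathcomp Require Import all_boot all_order all_algebra all_fingroup.
From Stdlib Require Import ClassicalEpsilon FunctionalExtensionality Lia.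
Import Order.TTheory GRing.Theory Num.Theory.
Local Open Scope ring_scope.
Set Implicit Arguments. Unset Strict Implicit. Unset Printing Implicit Defensive.

Section Classic.
Variable T : Type.
Definition ceq (x y : T) : bool :=
  if excluded_middle_informative (x = y) then true else false.
Lemma ceqP : Equality.axiom ceq.
Proof. move=> x y; rewrite /ceq; case: excluded_middle_informative => H; by constructor. Qed.
Definition cfind (P : pred T) (k : nat) : option T :=
  match excluded_middle_informative (exists x, P x) with
  | left H => Some (proj1_sig (constructive_indefinite_description _ H))
  | right _ => None end.
Lemma cfind_correct P k x : cfind P k = Some x -> P x.
Proof.
rewrite /cfind; case: excluded_middle_informative => // H [<-].
by case: constructive_indefinite_description.
Qed.
Lemma cfind_complete (P : pred T) : (exists x, P x) -> exists k, cfind P k.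
Proof. move=> H; exists 0%N; rewrite /cfind; by case: excluded_middle_informative. Qed.
Lemma cfind_ext (P Q : pred T) : P =1 Q -> cfind P =1 cfind Q.
Proof. move=> H; have -> : P = Q by apply: functional_extensionality. by []. Qed.
End Classic.

HB.instance Definition _ (R : comNzRingType) (n : nat) :=
  hasDecEq.Build (mps R n) (@ceqP (mps R n)).
HB.instance Definition _ (R : comNzRingType) (n : nat) :=
  hasChoice.Build (mps R n) (@cfind_correct (mps R n)) (@cfind_complete (mps R n))
    (@cfind_ext (mps R n)).

Section Ring.
Variables (R : comNzRingType) (n : nat).
Local Notation M := (mps R n).
Implicit Types (f g h : M) (e d c : 'I_n -> nat).

Definition bsum (N : nat) e (F : ('I_n -> nat) -> R) : R :=
  \sum_(d : {ffun 'I_n -> 'I_N.+1} | [forall k, (d k <= e k)%N])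
    F (fun k => nat_of_ord (d k)).

Definition emax e := (\max_(k < n) e k)%N.
Lemma le_emax e k : (e k <= emax e)%N.
Proof. exact: (leq_bigmax_cond (F:=e)). Qed.

Lemma mulE f g e : mps_mul f g e = bsum (emax e) e (fun d => f d * g (fun k => e k - d k)%N).
Proof. by []. Qed.

Lemma bsum_widen N N' e F : (forall k, e k <= N)%N -> (N <= N')%N ->
  bsum N e F = bsum N' e F.
Proof.
move=> HeN HN; rewrite /bsum.
pose h (d : {ffun 'I_n -> 'I_N.+1}) : {ffun 'I_n -> 'I_N'.+1} := [ffun k => inord (d k)].
pose h' (d : {ffun 'I_n -> 'I_N'.+1}) : {ffun 'I_n -> 'I_N.+1} := [ffun k => inord (d k)].
symmetry; rewrite (reindex_onto h h') /=; last first.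
  move=> d /forallP Hd; apply/ffunP => k; rewrite !ffunE; apply/val_inj => /=.
  rewrite inordK ?inordK //; first by rewrite ltnS (leq_trans (Hd k)).
  by rewrite ltnS (leq_trans (Hd k)) // (leq_trans (HeN k)).
apply: eq_big => d.
  apply/andP/idP => [[H _]|H]; last first.
    split.
      apply/forallP => k; rewrite ffunE inordK; first exact: (forallP H k).
      by rewrite ltnS (leq_trans (ltnSE (ltn_ord (d k)))).
    apply/eqP/ffunP => k; rewrite !ffunE; apply/val_inj => /=.
    rewrite inordK ?inordK //; by rewrite ltnS (leq_trans (ltnSE (ltn_ord (d k)))).
  apply/forallP => k; move/forallP: H => /(_ k); rewrite ffunE inordK //.
  by rewrite ltnS (leq_trans (ltnSE (ltn_ord (d k)))).
move=> _; congr F; apply: functional_extensionality => k; rewrite ffunE inordK //.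
by rewrite ltnS (leq_trans (ltnSE (ltn_ord (d k)))).
Qed.

Lemma bsum_indep N N' e F : (forall k, e k <= N)%N -> (forall k, e k <= N')%N ->
  bsum N e F = bsum N' e F.
Proof.
move=> H1 H2; rewrite (@bsum_widen N (maxn N N')) ?leq_maxl //.
by rewrite (@bsum_widen N' (maxn N N')) ?leq_maxr.
Qed.


Lemma ordv N (x : 'I_N.+1) : (x <= N)%N.
Proof. by rewrite -ltnS. Qed.

Lemma shift_sum N e (C : {ffun 'I_n -> 'I_N.+1}) (F : ('I_n -> nat) -> R) :
  (forall k, e k <= N)%N -> [forall k, (C k <= e k)%N] ->
  \sum_(D : {ffun 'I_n -> 'I_N.+1} | [forall k, (D k <= e k)%N] && [forall k, (C k <= D k)%N])
     F (fun k => nat_of_ord (D k))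
  = \sum_(D : {ffun 'I_n -> 'I_N.+1} | [forall k, (D k <= e k - C k)%N])
     F (fun k => (C k + D k)%N).
Proof.
move=> HeN /forallP HCe.
pose h (D : {ffun 'I_n -> 'I_N.+1}) : {ffun 'I_n -> 'I_N.+1} := [ffun k => inord (C k + D k)].
pose h' (D : {ffun 'I_n -> 'I_N.+1}) : {ffun 'I_n -> 'I_N.+1} := [ffun k => inord (D k - C k)].
rewrite (reindex_onto h h') /=; last first.
  move=> D /andP[_ /forallP HCD]; apply/ffunP => k; rewrite !ffunE; apply/val_inj => /=.
  have H1 : (D k - C k < N.+1)%N by rewrite ltnS; apply: (leq_trans (leq_subr _ _)); apply: ordv.
  by rewrite (inordK H1) subnKC ?HCD // inordK.
have key (D : {ffun 'I_n -> 'I_N.+1}) : [forall k, (D k <= e k - C k)%N] -> forall k, (C k + D k <= e k)%N.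
  by move=> /forallP HD k; rewrite -leq_subRL ?HCe ?HD.
have hv (D : {ffun 'I_n -> 'I_N.+1}) : [forall k, (D k <= e k - C k)%N] -> forall k, nat_of_ord (h D k) = (C k + D k)%N.
  by move=> HD k; rewrite ffunE inordK // ltnS (leq_trans (key D HD k)).
have Pe (D : {ffun 'I_n -> 'I_N.+1}) : ([forall k, (h D k <= e k)%N] && [forall k, (C k <= h D k)%N]) && (h' (h D) == D)
    = [forall k, (D k <= e k - C k)%N].
  apply/idP/idP.
    move=> /andP[/andP[/forallP H1 /forallP H2] /eqP H3]; apply/forallP => k.
    rewrite -H3 ffunE inordK; last by rewrite ltnS; apply: (leq_trans (leq_subr _ _)); apply: ordv.
    by rewrite leq_sub2r.
  move=> HD; have Hk := key D HD.
  apply/andP; split; [apply/andP; split|].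
  - by apply/forallP => k; rewrite hv.
  - by apply/forallP => k; rewrite hv // leq_addr.
  apply/eqP/ffunP => k; rewrite ffunE; apply/val_inj => /=; rewrite hv // addKn inordK //.
  all: try by rewrite ltnS ordv.
apply: eq_big => // D; rewrite Pe => HD; congr F; apply: functional_extensionality => k.
by rewrite hv.
Qed.


Lemma mpsA : associative (@mps_mul R n).
Proof.
move=> f g h; apply: functional_extensionality => e.
rewrite !mulE /bsum; set N := emax e.
have HeN : forall k, (e k <= N)%N by move=> k; exact: le_emax.
transitivity (\sum_(C : {ffun 'I_n -> 'I_N.+1} | [forall k, (C k <= e k)%N])
   \sum_(D : {ffun 'I_n -> 'I_N.+1} | [forall k, (D k <= e k - C k)%N])
     f (fun k => nat_of_ord (C k)) * (g (fun k => nat_of_ord (D k)) *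
        h (fun k => (e k - C k - D k)%N))).
  apply: eq_bigr => C /forallP HC; rewrite mulE (@bsum_indep _ N); last first.
  - by move=> k; rewrite (leq_trans (leq_subr _ _)).
  - by move=> k; exact: le_emax.
  by rewrite /bsum mulr_sumr.
transitivity (\sum_(D : {ffun 'I_n -> 'I_N.+1} | [forall k, (D k <= e k)%N])
   \sum_(C : {ffun 'I_n -> 'I_N.+1} | [forall k, (C k <= D k)%N])
     f (fun k => nat_of_ord (C k)) * g (fun k => (D k - C k)%N) *
        h (fun k => (e k - D k)%N)); last first.
  apply: eq_bigr => D /forallP HD; rewrite mulE (@bsum_indep _ N); last first.
  - by move=> k; rewrite (leq_trans (HD k)).
  - by move=> k; exact: le_emax.
  by rewrite /bsum mulr_suml.
symmetry; rewrite (exchange_big_dep (fun C : {ffun 'I_n -> 'I_N.+1} => [forall k, (C k <= e k)%N])) /=;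
  last first.
  move=> D C /forallP H1 /forallP H2; apply/forallP => k.
  exact: (leq_trans (H2 k) (H1 k)).
apply: eq_bigr => C HC.
rewrite (shift_sum (fun d => f (fun k => nat_of_ord (C k)) * g (fun k => (d k - C k)%N) *
        h (fun k => (e k - d k)%N)) HeN HC).
apply: eq_bigr => D _; rewrite mulrA; congr (_ * _ * _).
  by congr g; apply: functional_extensionality => k; rewrite addKn.
by congr h; apply: functional_extensionality => k; rewrite subnDA.
Qed.


Lemma mpsC : commutative (@mps_mul R n).
Proof.
move=> f g; apply: functional_extensionality => e.
rewrite !mulE /bsum; set N := emax e.
have HeN : forall k, (e k <= N)%N by move=> k; exact: le_emax.
pose h (D : {ffun 'I_n -> 'I_N.+1}) : {ffun 'I_n -> 'I_N.+1} := [ffun k => inord (e k - D k)].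
have hv D k : nat_of_ord (h D k) = (e k - D k)%N.
  by rewrite ffunE inordK // ltnS (leq_trans (leq_subr _ _)).
rewrite (reindex_onto h h) /=; last first.
  move=> D /forallP HD; apply/ffunP => k; apply/val_inj => /=.
  by rewrite hv hv subKn.
apply: eq_big => D.
  apply/idP/idP.
    move=> /andP[_ /eqP H]; apply/forallP => k; rewrite -H hv hv; exact: leq_subr.
  move=> /forallP HD; apply/andP; split.
    by apply/forallP => k; rewrite hv leq_subr.
  by apply/eqP/ffunP => k; apply/val_inj => /=; rewrite hv hv subKn.
move=> /andP[_ /eqP H]; rewrite mulrC.
have HD k : (D k <= e k)%N.
  have : nat_of_ord (h (h D) k) = D k by rewrite H.
  by rewrite hv hv => <-; exact: leq_subr.
congr (_ * _).
  by congr g; apply: functional_extensionality => k; rewrite hv subKn.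
by congr f; apply: functional_extensionality => k; rewrite hv.
Qed.

Lemma mps1l : left_id (@mps_one R n) (@mps_mul R n).
Proof.
move=> f; apply: functional_extensionality => e.
rewrite !mulE /bsum; set N := emax e.
pose D0 : {ffun 'I_n -> 'I_N.+1} := [ffun k => ord0].
rewrite (bigD1 D0) /=; last by apply/forallP => k; rewrite ffunE.
rewrite big1 ?addr0.
  rewrite /mps_one; have -> : [forall k, ((fun k => nat_of_ord (D0 k)) k == 0%N)].
    by apply/forallP => k; rewrite ffunE.
  rewrite mul1r; congr f; apply: functional_extensionality => k; by rewrite ffunE subn0.
move=> D /andP[_ HD]; rewrite /mps_one.
case: ifP => [/forallP H|]; last by rewrite mul0r.
by case/eqP: HD; apply/ffunP => k; apply/val_inj; rewrite ffunE /=; apply/eqP; exact: H.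
Qed.

Lemma mpsDl : left_distributive (@mps_mul R n) (@mps_add R n).
Proof.
move=> f g h; apply: functional_extensionality => e.
rewrite /mps_add !mulE /bsum -big_split /=; apply: eq_bigr => D _; exact: mulrDl.
Qed.

Definition mps0 : M := fun _ => 0.
Definition mpsN f : M := fun e => - f e.
Lemma mps_addA : associative (@mps_add R n).
Proof. by move=> f g h; apply: functional_extensionality => e; rewrite /mps_add addrA. Qed.
Lemma mps_addC : commutative (@mps_add R n).
Proof. by move=> f g; apply: functional_extensionality => e; rewrite /mps_add addrC. Qed.
Lemma mps_add0 : left_id mps0 (@mps_add R n).
Proof. by move=> f; apply: functional_extensionality => e; rewrite /mps_add /mps0 add0r. Qed.
Lemma mps_addN : left_inverse mps0 mpsN (@mps_add R n).
Proof. by move=> f; apply: functional_extensionality => e; rewrite /mps_add /mps0 /mpsN addNr. Qed.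

End Ring.

HB.instance Definition _ (R : comNzRingType) (n : nat) :=
  GRing.isZmodule.Build (mps R n) (@mps_addA R n) (@mps_addC R n) (@mps_add0 R n) (@mps_addN R n).
HB.instance Definition _ (R : comNzRingType) (n : nat) :=
  GRing.Zmodule_isComPzRing.Build (mps R n) (@mpsA R n) (@mpsC R n) (@mps1l R n) (@mpsDl R n).


Lemma coefM_top (R : comNzRingType) (p q : {poly R}) i j :
  (size p <= i.+1)%N -> (size q <= j.+1)%N -> (p * q)`_(i + j) = p`_i * q`_j.
Proof.
move=> Hp Hq; have Hi : (i < (i + j).+1)%N by rewrite ltnS leq_addr.
rewrite coefM (bigD1 (Ordinal Hi)) //=.
rewrite big1 ?addr0 ?addKn // => k Hk.
case: (ltngtP k i) => [lt|gt|eq]; last by case/eqP: Hk; apply/val_inj.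
  rewrite [q`__]nth_default ?mulr0 //; apply: leq_trans Hq _.
  by rewrite ltn_subRL ltn_add2r.
by rewrite nth_default ?mul0r //; apply: leq_trans Hp _.
Qed.

Lemma coef_mul_top (R : comNzRingType) (p q : {poly R}) x y s s' :
  (size p <= x.+1 - s)%N -> (size q <= y.+1 - s')%N ->
  (size (p * q)%R <= (x + y).+1 - (s + s'))%N /\
  (p * q)`_(x + y - (s + s')) = p`_(x - s) * q`_(y - s').
Proof.
case: (ltnP x s) => Hxs.
  rewrite (_ : (x.+1 - s = 0)%N); last by apply/eqP; rewrite subn_eq0.
  by rewrite leqn0 size_poly_eq0 => /eqP -> _; rewrite mul0r size_poly0 !coef0 mul0r.
case: (ltnP y s') => Hys.
  rewrite (_ : (y.+1 - s' = 0)%N); last by apply/eqP; rewrite subn_eq0.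
  by move=> _; rewrite leqn0 size_poly_eq0 => /eqP ->; rewrite mulr0 size_poly0 !coef0 mulr0.
rewrite !subSn ?leq_add // => Hp Hq.
have -> : (x + y - (s + s') = (x - s) + (y - s'))%N.
  move/ssrnat.leP: Hxs; move/ssrnat.leP: Hys => *; rewrite -?plusE -?minusE; lia.
split; last exact: coefM_top.
apply: leq_trans (size_mul_leq _ _) _.
move: (size p) (size q) Hp Hq => a b Ha Hb; apply/ssrnat.leP; move/ssrnat.leP: Ha; move/ssrnat.leP: Hb; rewrite -?plusE -?minusE => *; lia.
Qed.

Ltac natlia :=
  repeat (match goal with H : is_true (leq _ _) |- _ => revert H end);
  repeat (move=> /ssrnat.leP ?);
  (try apply/ssrnat.leP);
  (try rewrite <- plusE in * ); (try rewrite <- minusE in * ); (try rewrite <- multE in * ); lia.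

Section Top.
Variable n : nat.
Local Notation P := {poly {poly rat}}.
Local Notation S := {poly rat}.
Definition esum (e : 'I_n -> nat) := (\sum_(k < n) e k)%N.
Definition grade_ok (s : nat) (f : mps P n) := forall e, (size (f e) <= (esum e).+1 - s)%N.
Definition topp (s : nat) (f : mps P n) : mps S n := fun e => (f e)`_(esum e - s).

Lemma esum_split (e d : 'I_n -> nat) : (forall k, d k <= e k)%N ->
  esum e = (esum d + esum (fun k => e k - d k))%N.
Proof.
move=> H; rewrite /esum -big_split /=; apply: eq_bigr => k _; by rewrite subnKC.
Qed.

Lemma top_mul s s' f g : grade_ok s f -> grade_ok s' g ->
  grade_ok (s + s') (mps_mul f g) /\ topp (s + s') (mps_mul f g) = mps_mul (topp s f) (topp s' g).
Proof.
move=> Hf Hg; split.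
  move=> e; rewrite mulE /bsum; apply: leq_trans (size_sum _ _ _) _.
  apply/bigmax_leqP => D /forallP HD.
  rewrite (esum_split (d := fun k => nat_of_ord (D k))) //.
  by case: (coef_mul_top (Hf (fun k => nat_of_ord (D k))) (Hg (fun k => (e k - D k)%N))).
apply: functional_extensionality => e.
rewrite /topp !mulE /bsum coef_sum; apply: eq_bigr => D /forallP HD.
rewrite (esum_split (d := fun k => nat_of_ord (D k))) //.
by case: (coef_mul_top (Hf (fun k => nat_of_ord (D k))) (Hg (fun k => (e k - D k)%N))).
Qed.

Lemma esum0 (e : 'I_n -> nat) : [forall k, e k == 0%N] -> esum e = 0%N.
Proof. by move=> /forallP H; rewrite /esum big1 // => k _; apply/eqP. Qed.

Lemma top_big (I : Type) (r : seq I) (Pr : pred I) (F : I -> mps P n) (sf : I -> nat) :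
  (forall i, grade_ok (sf i) (F i)) ->
  grade_ok (\sum_(i <- r | Pr i) sf i)%N (\big[@mps_mul _ n/@mps_one _ n]_(i <- r | Pr i) F i) /\
  topp (\sum_(i <- r | Pr i) sf i)%N (\big[@mps_mul _ n/@mps_one _ n]_(i <- r | Pr i) F i)
   = \big[@mps_mul _ n/@mps_one _ n]_(i <- r | Pr i) topp (sf i) (F i).
Proof.
move=> HF; elim: r => [|i r [IH1 IH2]].
  rewrite !big_nil; split.
    move=> e; rewrite /mps_one subn0; case: ifP => _; by rewrite ?size_poly1 ?size_poly0.
  apply: functional_extensionality => e; rewrite /topp /mps_one subn0.
  case: ifP => H; last by rewrite coef0.
  by rewrite esum0 // coef1.
rewrite !big_cons; case: (Pr i) => //.
by case: (top_mul (HF i) IH1) => A B; rewrite B IH2.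
Qed.

End Top.

Section Atoms.
Variable n : nat.
Local Notation P := {poly {poly rat}}.
Local Notation S := {poly rat}.
Implicit Types (f g : mps P n).

Lemma grade_mmono s (c : P) (m : 'I_n -> nat) : (size c <= (esum m).+1 - s)%N -> grade_ok s (mmono c m).
Proof.
move=> H e; rewrite /mmono; case: ifP => [/forallP He|_]; last by rewrite size_poly0.
suff -> : e = m by [].
by apply: functional_extensionality => k; apply/eqP.
Qed.

Lemma top_mmono s (c : P) (m : 'I_n -> nat) : topp s (mmono c m) = mmono (c`_(esum m - s)) m.
Proof.
apply: functional_extensionality => e; rewrite /topp /mmono; case: ifP => [/forallP He|_].
  by have -> : e = m by apply: functional_extensionality => k; apply/eqP.
by rewrite coef0.
Qed.

Lemma grade_add s f g : grade_ok s f -> grade_ok s g -> grade_ok s (mps_add f g).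
Proof.
move=> Hf Hg e; rewrite /mps_add; apply: leq_trans (size_add _ _) _.
by rewrite geq_max Hf Hg.
Qed.

Lemma top_add s f g : topp s (mps_add f g) = mps_add (topp s f) (topp s g).
Proof. by apply: functional_extensionality => e; rewrite /topp /mps_add coefD. Qed.

Lemma esum_uvec (i : 'I_n) : esum (uvec i) = 1%N.
Proof.
rewrite /esum (bigD1 i) //= /uvec eqxx big1 // => k /negbTE ->; by [].
Qed.

Lemma esum_zero : esum (fun _ : 'I_n => 0%N) = 0%N.
Proof. by rewrite /esum big1. Qed.

Lemma esum_add (e d : 'I_n -> nat) : esum (fun k => e k + d k)%N = (esum e + esum d)%N.
Proof. by rewrite /esum big_split. Qed.

Definition Ax (x : S) (i : 'I_n) : mps S n :=
  fun e => if [forall k, (k != i) ==> (e k == 0%N)] then binomP x (e i) else 0.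

Lemma esum_axis (e : 'I_n -> nat) (i : 'I_n) : [forall k, (k != i) ==> (e k == 0%N)] -> esum e = e i.
Proof.
move=> /forallP H; rewrite /esum (bigD1 i) //= big1 ?addn0 // => k Hk.
by apply/eqP; move: (H k); rewrite Hk.
Qed.

Lemma pow_grade (i : 'I_n) : grade_ok 0 (pow_factor i).
Proof.
move=> e; rewrite /pow_factor subn0; case: ifP => H; last by rewrite size_poly0.
rewrite (esum_axis H) /tau; apply: leq_trans (size_mul_leq _ _) _.
rewrite size_polyXn; case: (size _) (size_polyC_leq1 (binomP 'X (e i))) => // [[|//]] _ /=.
by rewrite ?add0n ?add1n.
Qed.

Lemma pow_top (i : 'I_n) : topp 0 (pow_factor i) = Ax 'X i.
Proof.
apply: functional_extensionality => e; rewrite /topp /pow_factor /Ax subn0.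
case: ifP => H; last by rewrite coef0.
by rewrite (esum_axis H) /tau coefCM coefXn eqxx mulr1.
Qed.

Lemma addE (R : comNzRingType) (f g : mps R n) : mps_add f g = f + g.
Proof. by []. Qed.
Lemma mmonoN (R : comNzRingType) (c : R) (m : 'I_n -> nat) : mmono (- c) m = - mmono c m.
Proof.
apply: functional_extensionality => e; rewrite /mmono /GRing.opp /= /mpsN.
by case: ifP => _; rewrite ?oppr0.
Qed.
Lemma mmono0 (R : comNzRingType) (m : 'I_n -> nat) : mmono (0 : R) m = 0.
Proof. by apply: functional_extensionality => e; rewrite /mmono; case: ifP. Qed.
Lemma mmono_one (R : comNzRingType) : mmono (1 : R) (fun _ : 'I_n => 0%N) = 1.
Proof. by []. Qed.

Definition U (i : 'I_n) : mps S n := mmono 1 (uvec i).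

Lemma pair_grade (i j : 'I_n) : grade_ok 1 (pair_factor i j) /\
  topp 1 (pair_factor i j) = (U j - U i) * (1 + U j).
Proof.
have GX : grade_ok 1 (mps_add (mmono 1 (uvec j)) (mmono (-1) (uvec i))).
  by apply: grade_add; apply: grade_mmono; rewrite esum_uvec ?size_opp size_poly1.
have GY : grade_ok 0 (mps_add (mmono 1 (fun _ => 0%N))
       (mps_add (mmono tau (uvec j)) (mmono 1 (fun k => (uvec i k + uvec j k)%N)))).
  apply: grade_add; first by apply: grade_mmono; rewrite size_poly1.
  apply: grade_add; apply: grade_mmono.
    by rewrite esum_uvec /tau size_polyX.
  by rewrite size_poly1.
have [G T] := top_mul GX GY.
rewrite /pair_factor; split; first exact: G.
rewrite T !top_add !top_mmono !esum_uvec esum_zero esum_add !esum_uvec.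
rewrite coefN !coef1 /tau coefX /= !addE mmonoN mmono0 mmono_one addr0.
by [].
Qed.

End Atoms.

Section Gen.
Variables (R : comNzRingType) (n : nat).
Implicit Types (f g : mps R n) (e d : 'I_n -> nat).

Lemma mul_zero f g e :
  (forall d, (forall k, d k <= e k)%N -> f d * g (fun k => e k - d k)%N = 0) ->
  (f * g) e = 0.
Proof.
move=> H; rewrite /GRing.mul /= mulE /bsum big1 // => D /forallP HD; exact: H.
Qed.

Lemma mul_single f g e d0 : (forall k, d0 k <= e k)%N ->
  (forall d, (forall k, d k <= e k)%N -> (exists k, d k != d0 k) ->
      f d * g (fun k => e k - d k)%N = 0) ->
  (f * g) e = f d0 * g (fun k => e k - d0 k)%N.
Proof.
move=> Hd0 H; rewrite /GRing.mul /= mulE /bsum.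
pose D0 : {ffun 'I_n -> 'I_(emax e).+1} := [ffun k => inord (d0 k)].
have vD0 k : nat_of_ord (D0 k) = d0 k.
  by rewrite ffunE inordK // ltnS (leq_trans (Hd0 k)) // le_emax.
rewrite (bigD1 D0) /=; last by apply/forallP => k; rewrite vD0.
rewrite big1 ?addr0.
  by congr (f _ * g _); apply: functional_extensionality => k; rewrite vD0.
move=> D /andP[/forallP HD HD0]; apply: H => //.
have : ~~ [forall k, D k == D0 k].
  by apply: contra HD0 => /forallP HH; apply/eqP/ffunP => k; apply/eqP.
rewrite negb_forall => /existsP[k Hk]; exists k; by rewrite -vD0.
Qed.

Lemma evalD f g e : (f + g) e = f e + g e.
Proof. by []. Qed.
Lemma evalN f e : (- f) e = - f e.
Proof. by []. Qed.
Lemma eval0 e : (0 : mps R n) e = 0.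
Proof. by []. Qed.
Lemma eval_sum (I : Type) (r : seq I) (Pr : pred I) (F : I -> mps R n) e :
  (\sum_(i <- r | Pr i) F i) e = \sum_(i <- r | Pr i) F i e.
Proof.
elim: r => [|i r IH]; first by rewrite !big_nil.
by rewrite !big_cons; case: (Pr i); rewrite ?evalD IH.
Qed.
Lemma eval_sign (b : bool) f e : ((-1) ^+ b * f) e = (-1) ^+ b * f e.
Proof. by case: b; rewrite ?expr0 ?expr1 ?mul1r ?mulN1r. Qed.

Lemma mul_mmono (c : R) m f e :
  (mmono c m * f) e = if [forall k, (m k <= e k)%N] then c * f (fun k => e k - m k)%N else 0.
Proof.
case: ifP => [/forallP Hm|Hm].
  rewrite (mul_single (d0 := m)) //; first by rewrite /mmono; have -> : [forall k, m k == m k] by apply/forallP.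
  move=> d Hd [k Hk]; rewrite /mmono; case: ifP => [/forallP H|_]; last by rewrite mul0r.
  by move: (H k); rewrite (negbTE Hk).
apply: mul_zero => d Hd; rewrite /mmono; case: ifP => [/forallP H|_]; last by rewrite mul0r.
case/negP: Hm; apply/forallP => k; by move/eqP: (H k) => <-.
Qed.

Lemma mmonoM (c c' : R) (m m' : 'I_n -> nat) :
  mmono c m * mmono c' m' = mmono (c * c') (fun k => m k + m' k)%N.
Proof.
apply: functional_extensionality => e; rewrite mul_mmono /mmono.
have E : [forall k, e k == (m k + m' k)%N] =
         [forall k, (m k <= e k)%N] && [forall k, (e k - m k)%N == m' k].
  apply/forallP/andP => [H|[/forallP H1 /forallP H2] k].
    split; apply/forallP => k; rewrite (eqP (H k)) ?leq_addr //; by rewrite addKn.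
  by rewrite -(eqP (H2 k)) subnKC.
rewrite E; case: ifP => // _; case: ifP => _; by rewrite ?mulr0.
Qed.

End Gen.

Lemma binomP0 (x : {poly rat}) : binomP x 0 = 1.
Proof. by rewrite /binomP /= ?fact0 invr1 scale1r big_ord0. Qed.

Lemma binomPN (x : {poly rat}) (k : nat) : binomP x (Negz k) = 0.
Proof. by []. Qed.

Lemma binom_pascal (x : {poly rat}) (k : nat) :
  binomP (x + 1) k.+1 = binomP x k.+1 + binomP x k.
Proof.
set F := \prod_(m < k) (x - (m%:R)%:P).
have h1 : \prod_(m < k.+1) (x + 1 - (m%:R)%:P) = (x + 1) * F.
  rewrite big_ord_recl /= subr0; congr (_ * _); apply: eq_bigr => m _.
  by rewrite /bump /= add1n mulrSr polyCD polyC1 opprD addrACA subrr addr0.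
have h2 : \prod_(m < k.+1) (x - (m%:R)%:P) = F * (x - (k%:R)%:P).
  by rewrite big_ord_recr.
suff E : binomP (x + 1) k.+1 - binomP x k.+1 = binomP x k by rewrite -E subrKC.
rewrite /binomP h1 h2 -/F -scalerBr.
rewrite [F * (x - _)]mulrC -mulrBl opprB.
rewrite (_ : x + 1 + ((k%:R)%:P - x) = (k.+1)%:R%:P); last first.
  by rewrite addrC addrA subrK -natr1 polyCD polyC1.
rewrite mul_polyC scalerA; congr (_ *: F).
rewrite factS natrM invfM mulrC mulrA mulrV ?mul1r // unitfE pnatr_eq0 //.
Qed.

Section AxS.
Variable n : nat.
Local Notation S := {poly rat}.

Lemma Ax_step (x : S) (i : 'I_n) : Ax x i * (1 + U i) = Ax (x + 1) i.
Proof.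
apply: functional_extensionality => e.
rewrite mulrDr mulr1 evalD [Ax x i * U i]mulrC /U mul_mmono mul1r /Ax.
case: (boolP [forall k, (k != i) ==> (e k == 0%N)]) => Hs.
  have E : [forall k, (uvec i k <= e k)%N] = (0 < e i)%N.
    apply/forallP/idP => [/(_ i)|H k]; first by rewrite /uvec eqxx.
    rewrite /uvec; case: eqP => [->|]; by rewrite ?H.
  rewrite E; case: (e i) => [|k]; first by rewrite addr0 !binomP0.
  have -> : [forall k0, (k0 != i) ==> ((e k0 - uvec i k0)%N == 0%N)].
    apply/forallP => t; apply/implyP => Ht; move/forallP: Hs => /(_ t); rewrite Ht /= => /eqP ->.
    by [].
  have -> : (k.+1 - uvec i i = k)%N by rewrite /uvec eqxx subn1.
  by rewrite binom_pascal addrC.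
have [t Ht] : exists t, (t != i) && (e t != 0%N).
  move: Hs; rewrite negb_forall => /existsP [t]; rewrite negb_imply => H; by exists t.
case: ifP => _; last by rewrite addr0.
case: ifP => H; last by rewrite addr0.
case/andP: Ht => Hti /eqP Het; move/forallP: H => /(_ t); rewrite Hti /= /uvec (negbTE Hti) subn0.
by move/eqP.
Qed.

Lemma Ax_pow (x : S) (i : 'I_n) m : Ax x i * (1 + U i) ^+ m = Ax (x + (m%:R)%:P) i.
Proof.
elim: m => [|m IH]; first by rewrite expr0 mulr1 addr0.
by rewrite exprSr mulrA IH Ax_step -addrA -polyC1 -polyCD natr1.
Qed.

Lemma prod_Ax_seq (x : 'I_n -> S) (r : seq 'I_n) e : uniq r ->
  (\prod_(i <- r) Ax (x i) i) e =
  if [forall k, (k \notin r) ==> (e k == 0%N)] then \prod_(i <- r) binomP (x i) (e i) else 0.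
Proof.
elim: r e => [|i r IH] e.
  move=> _; rewrite !big_nil /GRing.one /= /mps_one.
  have -> : [forall k, (k \notin [::]) ==> (e k == 0%N)] = [forall k, e k == 0%N].
    by apply: eq_forallb => k.
  by [].
rewrite cons_uniq => /andP[Hir Hu]; rewrite big_cons.
case: (boolP [forall k, (k \notin i :: r) ==> (e k == 0%N)]) => Hs.
  pose d0 := fun k => if k == i then e k else 0%N.
  rewrite (mul_single (d0 := d0)); last first.
    move=> d Hd [k Hk]; rewrite /Ax; case: ifP => [/forallP Hd1|_]; last by rewrite mul0r.
    rewrite IH //; case: ifP => [/forallP H2|_]; last by rewrite mulr0.
    exfalso; move: Hk; rewrite /d0; case: (k =P i) => [->|/eqP Hki].
      move: (H2 i); rewrite (negbTE Hir) /= subn_eq0 => He; by rewrite eqn_leq He Hd.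
    by move: (Hd1 k); rewrite Hki /= => /eqP ->.
    by move=> k; rewrite /d0; case: eqP.
  rewrite big_cons /Ax.
  have -> : [forall k, (k != i) ==> (d0 k == 0%N)].
    by apply/forallP => k; rewrite /d0; case: eqP.
  rewrite IH // /d0 eqxx.
  have -> : [forall k, (k \notin r) ==> ((e k - (if k == i then e k else 0))%N == 0%N)].
    apply/forallP => k; apply/implyP => Hk; case: (k =P i) => [_|/eqP Hki]; first by rewrite subnn.
    by move/forallP: Hs => /(_ k); rewrite in_cons negb_or Hki Hk /= subn0.
  congr (_ * _); rewrite big_seq_cond [RHS]big_seq_cond; apply: eq_bigr => j /andP[Hj _].
  case: (j =P i) => [Hji|]; last by rewrite subn0.
  by move: Hir; rewrite -Hji Hj.
apply: mul_zero => d Hd; rewrite /Ax.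
case: ifP => [/forallP Hd1|_]; last by rewrite mul0r.
rewrite IH //; case: ifP => [/forallP H2|_]; last by rewrite mulr0.
exfalso; move: Hs; rewrite negb_forall => /existsP [t]; rewrite negb_imply in_cons negb_or.
case/andP => /andP[Hti Htr] Het.
move: (H2 t); rewrite Htr /=; move: (Hd1 t); rewrite Hti /= => /eqP ->; rewrite subn0.
by rewrite (negbTE Het).
Qed.

Lemma prod_Ax (x : 'I_n -> S) e :
  (\prod_(i < n) Ax (x i) i) e = \prod_(i < n) binomP (x i) (e i).
Proof.
rewrite prod_Ax_seq ?index_enum_uniq //.
have -> : [forall k, (k \notin index_enum 'I_n) ==> (e k == 0%N)].
  by apply/forallP => k; rewrite mem_index_enum.
by [].
Qed.

End AxS.

Lemma prod_ltn (R : comPzRingType) (n j : nat) (c : R) : (j <= n)%N ->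
  \prod_(i < n | (i < j)%N) c = c ^+ j.
Proof.
move=> Hj; have := big_ord_narrow_cond (idx:=1) (op:=*%R) (P := predT) (F := fun _ : 'I_n => c) Hj.
rewrite /= => ->; by rewrite prodr_const card_ord.
Qed.

Lemma binomP_neg (x : {poly rat}) (m k : nat) : (m < k)%N -> binomP x (m%:Z - k%:Z) = 0.
Proof.
move=> H; have -> : m%:Z - k%:Z = Negz (k - m).-1.
  rewrite NegzE prednK ?subn_gt0 // -subzn ?opprB //; exact: ltnW.
by [].
Qed.

Section Teval.
Variable n : nat.
Local Notation S := {poly rat}.

Definition Mb (b : 'I_n -> nat) : 'M[S]_n :=
  \matrix_(i, j) binomP ('X + (((i : nat)%:R)%:P)) ((b i)%:Z - (j : nat)%:Z).

Lemma U_pow (k : 'I_n) m : U k ^+ m = mmono 1 (fun t => m * uvec k t)%N.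
Proof.
elim: m => [|m IH]; first by rewrite expr0 -mmono_one; congr mmono.
by rewrite exprS IH /U mmonoM mulr1; congr mmono; apply: functional_extensionality => t; rewrite mulSn.
Qed.

Lemma prod_U (s : 'S_n) :
  \prod_(i < n) U i ^+ (s i) = mmono 1 (fun t => nat_of_ord (s t)).
Proof.
have H : forall r : seq 'I_n, \prod_(i <- r) U i ^+ (s i) =
    mmono 1 (fun t => \sum_(i <- r) s i * uvec i t)%N.
  elim => [|i r IH]; first by rewrite !big_nil -mmono_one; congr mmono;
    apply: functional_extensionality => t; rewrite big_nil.
  rewrite !big_cons IH U_pow mmonoM mulr1; congr mmono; apply: functional_extensionality => t.
  by rewrite big_cons.
rewrite H; congr mmono; apply: functional_extensionality => t.
rewrite (bigD1 t) //= big1 ?addn0.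
  by rewrite /uvec eqxx muln1.
move=> i Hi; rewrite /uvec; case: eqP => [Hst|]; last by rewrite muln0.
by rewrite Hst eqxx in Hi.
Qed.

Lemma T_eval (b : 'I_n -> nat) :
  ((\prod_(i < n) Ax 'X i) * (\prod_(i < n) \prod_(j < n | (i < j)%N) ((U j - U i) * (1 + U j)))) b
  = \det (Mb b).
Proof.
rewrite [X in _ * X](eq_bigr (fun i : 'I_n => (\prod_(j < n | (i < j)%N) (U j - U i)) *
    \prod_(j < n | (i < j)%N) (1 + U j))); last by move=> i _; rewrite big_split.
rewrite big_split /=.
have E1 : \prod_(i < n) \prod_(j < n | (i < j)%N) (1 + U j) = \prod_(j < n) (1 + U j) ^+ j.
  rewrite (exchange_big_dep predT) //=; apply: eq_bigr => j _; apply: prod_ltn.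
  exact: ltnW.
have E2 : \prod_(i < n) \prod_(j < n | (i < j)%N) (U j - U i) = \det (Vandermonde n (\row_j U j)).
  by rewrite det_Vandermonde; apply: eq_bigr => i _; apply: eq_bigr => j _; rewrite !mxE.
rewrite E1 E2 mulrCA -big_split /=.
under eq_bigr do rewrite Ax_pow.
rewrite -det_tr /determinant mulr_suml eval_sum; apply: eq_bigr => s _.
rewrite -mulrA eval_sign; congr (_ * _).
have -> : \prod_i (Vandermonde n (\row_j U j))^T i (s i) = \prod_(i < n) U i ^+ (s i).
  by apply: eq_bigr => i _; rewrite !mxE.
rewrite prod_U mul_mmono mul1r.
case: ifP => [/forallP H|/negP H].
  rewrite prod_Ax; apply: eq_bigr => i _; by rewrite mxE subzn.
have [i Hi] : exists i, (b i < s i)%N.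
  case: (boolP [exists i, (b i < s i)%N]) => [/existsP [i Hi]|Hn]; first by exists i.
  case: H; apply/forallP => i; move: Hn; rewrite negb_exists => /forallP /(_ i); by rewrite -leqNgt.
by rewrite (bigD1 i) //= mxE binomP_neg // mul0r.
Qed.

End Teval.

Lemma size_ie k : size (index_enum 'I_k) = k.
Proof. by rewrite /index_enum unlock -enumT size_enum_ord. Qed.

Lemma ffpoly_monic (j : nat) : \prod_(m < j) ('X - ((m%:R : rat))%:P) \is monic.
Proof. exact: monic_prod_XsubC. Qed.
Lemma ffpoly_size (j : nat) : size (\prod_(m < j) ('X - ((m%:R : rat))%:P)) = j.+1.
Proof. by rewrite size_prod_XsubC size_ie. Qed.

Lemma binomX_top (c : rat) (k : nat) :
  (size (binomP ('X + c%:P) k) <= k.+1)%N /\ (binomP ('X + c%:P) k)`_k = (k`!%:R)^-1.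
Proof.
have E : \prod_(m < k) ('X + c%:P - ((m : nat)%:R)%:P) = \prod_(m < k) ('X - ((m%:R - c))%:P).
  by apply: eq_bigr => m _; rewrite polyCB opprB addrA.
rewrite /binomP E; split.
  by apply: leq_trans (size_scale_leq _ _) _; rewrite size_prod_XsubC size_ie.
have M := monic_prod_XsubC (index_enum 'I_k) predT (fun m : 'I_k => (m%:R - c)).
rewrite coefZ; move/monicP: M => M.
have S : size (\prod_(m < k) ('X - ((m%:R - c))%:P)) = k.+1.
  by rewrite size_prod_XsubC size_ie.
by rewrite -[X in _`_X]/(k.+1.-1) -S -lead_coefE M mulr1.
Qed.

Lemma coef_prod_top (I : Type) (r : seq I) (F : I -> {poly rat}) (k : I -> nat) :
  (forall i, (size (F i) <= (k i).+1)%N) ->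
  (size (\prod_(i <- r) F i)%R <= (\sum_(i <- r) k i).+1)%N /\
  (\prod_(i <- r) F i)`_(\sum_(i <- r) k i) = \prod_(i <- r) (F i)`_(k i).
Proof.
move=> H; elim: r => [|i r [IH1 IH2]]; first by rewrite !big_nil size_poly1 coef1.
rewrite !big_cons; split; last by rewrite coefM_top // IH2.
apply: leq_trans (size_mul_leq _ _) _.
move: (H i) IH1; move: (size (F i)) (size (\prod_(j <- r) F j)) => a c Ha Hc.
by natlia.
Qed.

Lemma coef_sign (p : {poly rat}) (b : bool) k : ((-1) ^+ b * p)`_k = (-1) ^+ b * p`_k.
Proof. by case: b; rewrite ?expr0 ?expr1 ?mul1r ?mulN1r ?coefN. Qed.

Section Dnz.
Variable n : nat.

Definition Lm (b : 'I_n -> nat) : 'M[rat]_n :=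
  \matrix_(i, j) if ((j : nat) <= b i)%N then ((b i - j)`!%:R)^-1 else 0.

Lemma sum_perm_sub (b : 'I_n -> nat) (s : 'S_n) :
  (forall i, s i <= b i)%N -> (forall i : 'I_n, i <= b i)%N ->
  (\sum_(i < n) (b i - s i))%N = (\sum_(i < n) (b i - i))%N.
Proof.
move=> H1 H2.
have e1 : (\sum_(i < n) (b i - s i) + \sum_(i < n) s i = \sum_(i < n) b i)%N.
  by rewrite -big_split; apply: eq_bigr => i _; rewrite /= subnK.
have e2 : (\sum_(i < n) (b i - i) + \sum_(i < n) (i : nat) = \sum_(i < n) b i)%N.
  by rewrite -big_split; apply: eq_bigr => i _; rewrite /= subnK.
have e3 : (\sum_(i < n) (s i : nat) = \sum_(i < n) (i : nat))%N.
  by rewrite [RHS](reindex_inj (@perm_inj _ s)).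
by apply/eqP; rewrite -(eqn_add2r (\sum_(i < n) (i : nat))) -{1}e3 e1 e2.
Qed.

Lemma coef_det (b : 'I_n -> nat) : (forall i : 'I_n, i <= b i)%N ->
  (\det (Mb b))`_(\sum_(i < n) (b i - i))%N = \det (Lm b).
Proof.
move=> Hb; rewrite /determinant coef_sum; apply: eq_bigr => s _.
rewrite coef_sign; congr (_ * _).
case: (boolP [forall i, (s i <= b i)%N]) => [/forallP H|H].
  rewrite -(sum_perm_sub H Hb).
  have E : \prod_i Mb b i (s i) = \prod_(i < n) binomP ('X + ((i : nat)%:R)%:P) (b i - s i)%N.
    by apply: eq_bigr => i _; rewrite mxE subzn.
  rewrite E.
  have [_ ->] := coef_prod_top (index_enum 'I_n)
     (F := fun i : 'I_n => binomP ('X + ((i : nat)%:R)%:P) (b i - s i)%N)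
     (k := fun i : 'I_n => (b i - s i)%N) (fun i => proj1 (binomX_top _ _)).
  by apply: eq_bigr => i _; rewrite mxE H (proj2 (binomX_top _ _)).
have [i Hi] : exists i, (b i < s i)%N.
  case: (boolP [exists i, (b i < s i)%N]) => [/existsP [i Hi]|Hn]; first by exists i.
  case/negP: H; apply/forallP => i; move: Hn; rewrite negb_exists => /forallP /(_ i).
  by rewrite -leqNgt.
rewrite (bigD1 i) //= mxE binomP_neg // mul0r coef0.
by rewrite (bigD1 i) //= mxE leqNgt Hi /= mul0r.
Qed.

Definition pj (j : nat) : {poly rat} := \prod_(m < j) ('X - ((m%:R : rat))%:P).

Lemma pj_horner (x j : nat) : (pj j).[x%:R] = (x ^_ j)%:R.
Proof.
rewrite /pj horner_prod ffact_prod natr_prod.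
case: (leqP j x) => Hj.
  apply: eq_bigr => m _; rewrite hornerXsubC natrB //.
  by apply: leq_trans (ltnW (ltn_ord m)) Hj.
have Hx : (x < j)%N := Hj.
rewrite (bigD1 (Ordinal Hx)) //= hornerXsubC subrr mul0r.
by rewrite (bigD1 (Ordinal Hx)) //= subnn mul0r.
Qed.

Lemma detLm_neq0 (b : 'I_n -> nat) : (forall i j : 'I_n, (i < j)%N -> (b i < b j)%N) ->
  \det (Lm b) != 0.
Proof.
move=> Hb.
pose w : 'rV[rat]_n := \row_i ((b i)`!%:R)^-1.
pose F : 'M[rat]_n := \matrix_(i, j) ((b i) ^_ j)%:R.
have EL : Lm b = diag_mx w *m F.
  apply/matrixP => i j; rewrite mul_diag_mx !mxE.
  case: leqP => Hj.
    rewrite -(ffact_fact Hj) natrM invfM mulrAC mulVf ?mul1r //.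
    by rewrite pnatr_eq0 -lt0n ffact_gt0.
  by rewrite ffact_small // mulr0.
pose V : 'M[rat]_n := \matrix_(i, k) ((b i)%:R) ^+ (k : nat).
pose Um : 'M[rat]_n := \matrix_(k, j) (pj j)`_k.
have EF : F = V *m Um.
  apply/matrixP => i j; rewrite !mxE -pj_horner (@horner_coef_wide _ n).
    by apply: eq_bigr => k _; rewrite !mxE mulrC.
  by rewrite /pj ffpoly_size.
have dU : \det Um = 1.
  rewrite -det_tr det_trig.
    rewrite big1 // => i _; rewrite !mxE.
    have M := ffpoly_monic i; move/monicP: M; rewrite lead_coefE ffpoly_size /= => M.
    by rewrite /pj M.
  apply/forallP => i; apply/forallP => j; apply/implyP => Hij; rewrite !mxE.
  by rewrite nth_default // /pj ffpoly_size.
have dV : \det V != 0.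
  have -> : V = (Vandermonde n (\row_i ((b i)%:R : rat)))^T.
    by apply/matrixP => i k; rewrite !mxE.
  rewrite det_tr det_Vandermonde; apply/prodf_neq0 => i _; apply/prodf_neq0 => j Hij.
  rewrite !mxE subr_eq0 eqr_nat; apply/eqP => E.
  by have := Hb _ _ Hij; rewrite E ltnn.
rewrite EL det_mulmx det_diag EF det_mulmx dU mulr1 mulf_neq0 //.
apply/prodf_neq0 => i _; rewrite mxE invr_eq0 pnatr_eq0 -lt0n; exact: fact_gt0.
Qed.

End Dnz.

Lemma fst_flatten (M : seq (nat * nat)) :
  uniq (flatten [seq [:: p.1; p.2] | p <- M]) ->
  uniq [seq p.1 | p <- M] /\ {subset [seq p.1 | p <- M] <= flatten [seq [:: p.1; p.2] | p <- M]}.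
Proof.
elim: M => [|p M IH] //= /andP[H1 /andP[_ H2]]; have [U S] := IH H2.
split.
  rewrite U andbT; apply/negP => /S H; case/negP: H1; by rewrite in_cons H orbT.
move=> x; rewrite !in_cons => /orP[->//|/S ->]; by rewrite !orbT.
Qed.

Lemma matching_facts (n : nat) (M : seq (nat * nat)) : is_matching n M ->
  let a := matching_seq M in
  [/\ size a = n,
      (forall i j, (i < j < n)%N -> (nth 0 a i < nth 0 a j)%N) &
      (forall i, (i < n)%N -> (i < nth 0 a i)%N)].
Proof.
case/and4P => /eqP Hs _ Hp _ a.
have Hu : uniq (flatten [seq [:: p.1; p.2] | p <- M]) by rewrite (perm_uniq Hp) iota_uniq.
have [U S] := fst_flatten Hu.
have sa : size a = n by rewrite /a /matching_seq size_sort size_map.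
have srt : sorted ltn a.
  by rewrite ltn_sorted_uniq_leq sort_uniq U sort_sorted //; exact: leq_total.
have ge1 : forall x, x \in a -> (0 < x)%N.
  move=> x; rewrite mem_sort => /S; rewrite (perm_mem Hp) mem_iota => /andP[]; by [].
have inc : forall i j, (i < j < n)%N -> (nth 0 a i < nth 0 a j)%N.
  move=> i j /andP[Hij Hjn]; apply: (sorted_ltn_nth ltn_trans 0 srt) => //.
    by rewrite inE sa (ltn_trans Hij).
  by rewrite inE sa.
split => // i Hi; elim: i Hi => [|i IH] Hi.
  by apply: ge1; rewrite mem_nth // sa.
have h1 := IH (ltnW Hi); have h2 : (nth 0 a i < nth 0 a i.+1)%N by apply: inc; rewrite leqnn Hi.
by natlia.
Qed.

Lemma sum_ltn (n j : nat) : (j <= n)%N -> (\sum_(i < n | (i < j)%N) 1 = j)%N.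
Proof.
move=> Hj; have := big_ord_narrow_cond (idx:=0%N) (op:=addn) (P := predT) (F := fun _ : 'I_n => 1%N) Hj.
by rewrite /= => ->; rewrite sum1_card card_ord.
Qed.

Lemma bigE (R : comNzRingType) (n : nat) (I : Type) (r : seq I) (P : pred I) (F : I -> mps R n) :
  \big[@mps_mul R n/@mps_one R n]_(i <- r | P i) F i = \prod_(i <- r | P i) F i.
Proof. by []. Qed.

Lemma zeroN : (0%R : nat) = 0%N.
Proof. by []. Qed.

Theorem mainTheorem10 (n : nat) (M : seq (nat * nat)) :
  is_matching n M ->
  size (Phi n (matching_seq M)) = (dsum n (matching_seq M)).+1 /\
  (Phi n (matching_seq M))`_(dsum n (matching_seq M)) = Dpoly n (matching_seq M).
Proof.
move=> HM; have [Hsz Hinc Hge] := matching_facts HM.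
set a := matching_seq M.
pose b : 'I_n -> nat := fun i => (@nth nat 0%N a i).-1.
have Hb1 : forall i : 'I_n, (i <= b i)%N.
  by move=> i; have := Hge i (ltn_ord i); rewrite /b /a; natlia.
have Hb2 : forall i j : 'I_n, (i < j)%N -> (b i < b j)%N.
  move=> i j Hij; have := Hinc i j; rewrite Hij ltn_ord => /(_ erefl).
  have := Hge i (ltn_ord i); rewrite /b /a; natlia.
have [GP TP] := top_big (index_enum 'I_n) (fun _ => true) (F := fun i => pow_factor i) (sf := fun _ => 0%N)
   (@pow_grade n).
have inner : forall i : 'I_n,
   grade_ok (\sum_(j < n | (i < j)%N) 1)%N
     (\big[@mps_mul _ n/@mps_one _ n]_(j < n | (i < j)%N) pair_factor i j) /\
   topp (\sum_(j < n | (i < j)%N) 1)%N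
     (\big[@mps_mul _ n/@mps_one _ n]_(j < n | (i < j)%N) pair_factor i j) =
   \big[@mps_mul _ n/@mps_one _ n]_(j < n | (i < j)%N) topp 1 (pair_factor i j).
  move=> i; exact: (top_big (index_enum 'I_n) (fun j : 'I_n => (i < j)%N) (F := fun j => pair_factor i j)
      (sf := fun _ => 1%N) (fun j => proj1 (pair_grade i j))).
have [GQ TQ] := top_big (index_enum 'I_n) (fun _ => true)
   (F := fun i : 'I_n => \big[@mps_mul _ n/@mps_one _ n]_(j < n | (i < j)%N) pair_factor i j)
   (sf := fun i : 'I_n => \sum_(j < n | (i < j)%N) 1)%N (fun i => proj1 (inner i)).
have [GPhi TPhi] := top_mul GP GQ.
have sP0 : (\sum_(i <- index_enum 'I_n | true) 0 = 0)%N by rewrite big1.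
have sQE : (\sum_(i <- index_enum 'I_n | true) \sum_(j < n | (i < j)%N) 1 = \sum_(i < n) (i : nat))%N.
  rewrite (exchange_big_dep predT) //=; apply: eq_bigr => j _; apply: sum_ltn; exact: ltnW.
have RP : \big[@mps_mul _ n/@mps_one _ n]_(i <- index_enum 'I_n | true) topp 0 (pow_factor i)
    = \prod_(i < n) Ax 'X i.
  by rewrite bigE; apply: eq_bigr => i _; exact: pow_top.
have RQ : \big[@mps_mul _ n/@mps_one _ n]_(i <- index_enum 'I_n | true)
      topp (\sum_(j < n | (i < j)%N) 1)%N
        (\big[@mps_mul _ n/@mps_one _ n]_(j < n | (i < j)%N) pair_factor i j)
    = \prod_(i < n) \prod_(j < n | (i < j)%N) ((U j - U i) * (1 + U j)).
  rewrite bigE; apply: eq_bigr => i _; rewrite (proj2 (inner i)) bigE.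
  apply: eq_bigr => j _; exact: (proj2 (pair_grade i j)).
have HT := congr1 (fun f => f b) TPhi.
rewrite /= TP TQ RP RQ in HT.
have sumb : (\sum_(i < n) (i : nat) <= esum b)%N by apply: leq_sum => i _; exact: Hb1.
have Hd : (esum b - (\sum_(i <- index_enum 'I_n | true) 0 +
     \sum_(i <- index_enum 'I_n | true) \sum_(j < n | (i < j)%N) 1) = dsum n a)%N.
  rewrite sP0 sQE add0n.
  have e2 : (\sum_(i < n) (b i - i) + \sum_(i < n) (i : nat) = esum b)%N.
    by rewrite -big_split; apply: eq_bigr => i _; rewrite /= subnK.
  rewrite -e2 addnK /dsum; apply: eq_bigr => i _; rewrite /b /a; natlia.
have HD : Dpoly n a = \det (Mb b).
  rewrite /Dpoly /Mb; congr (\det _); apply/matrixP => i j; rewrite !mxE; congr binomP.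
  have Hpos : (0 < nth 0%N a i)%N by have := Hge i (ltn_ord i); rewrite /a; natlia.
  rewrite /b -[in LHS](prednK Hpos) -addn1 PoszD addrAC addrK.
  by [].
have Hcoef : (Phi n a)`_(dsum n a) = Dpoly n a.
  rewrite HD -T_eval -[RHS]/(mps_mul _ _ b) -HT /topp -Hd.
  by [].
have Hnz : Dpoly n a != 0.
  rewrite HD; apply/negP => /eqP H0; have := coef_det Hb1; rewrite H0 coef0 => H1.
  by move: (detLm_neq0 Hb2); rewrite -H1 eqxx.
split => //.
have Hs := GPhi b.
rewrite subSn ?Hd in Hs; last by rewrite sP0 sQE add0n.
apply/eqP; rewrite eqn_leq; apply/andP; split.
  by [].
rewrite ltnNge; apply/negP => H; move: Hnz; rewrite -Hcoef nth_default //.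
by rewrite eqxx.
Qed.
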